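(* Let $G=(V,E)$ be a finite, undirected, unweighted, 2-vertex-connected graph with $n=|V|$ vertices, and let $\gamma<3$ be a real number. Suppose $T$ is a minimum spanning tree of $G$ and $C_T$ is a cycle (closed walk) in $G$, not necessarily simple, whose vertex set contains every vertex of odd degree in $T$, and such that $\ell(C_T)\le(1+\gamma)|C_T|$. Then $G$ has a TSP tour of length at most $\frac{4n}{3-\gamma}$.
   Context: For a (not necessarily simple) cycle $C$, i.e. a closed walk in $G$ that may repeat vertices, $|C|$ denotes the number of distinct vertices of $C$ and $\ell(C)$ denotes the length of a traversal of $C$, i.e. the number of edges traversed counted with multiplicity. A TSP tour of $G$ is a closed walk in $G$ visiting every vertex at least once, with length the number of edges traversed counted with multiplicity. Since $G$ is unweighted, every spanning tree is a minimum spanning tree. *)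

(* Defs.v *)
From mathcomp Require Import all_boot all_order all_algebra.
Set Implicit Arguments. Unset Strict Implicit. Unset Printing Implicit Defensive.

Definition simple_graph (V : finType) (e : rel V) : Prop :=
  symmetric e /\ irreflexive e.

Definition connected_graph (V : finType) (e : rel V) : Prop :=
  forall x y : V, connect e x y.

Definition del_vertex (V : finType) (e : rel V) (v : V) : rel V :=
  fun a b => [&& e a b, a != v & b != v].

Definition two_vertex_connected (V : finType) (e : rel V) : Prop :=
  2 < #|V| /\ connected_graph e /\
  forall v x y : V, x != v -> y != v -> connect (del_vertex e v) x y.

Definition del_edge (V : finType) (t : rel V) (u v : V) : rel V :=
  fun a b => t a b && ~~ (((a == u) && (b == v)) || ((a == v) && (b == u))).

(* t is a spanning tree of the graph e: a symmetric subgraph of e on all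
   vertices that is connected and minimally so (every edge is a bridge,
   i.e. it is acyclic). *)
Definition spanning_tree (V : finType) (e t : rel V) : Prop :=
  symmetric t /\ subrel t e /\ connected_graph t /\
  forall u v : V, t u v -> ~~ connect (del_edge t u v) u v.

Definition deg (V : finType) (t : rel V) (x : V) : nat := #|[set y | t x y]|.

(* A closed walk starting and ending at x, traversing the vertices of p in
   order: x, p_1, ..., p_k with p_k = x. *)
Definition closed_walk (V : finType) (e : rel V) (x : V) (p : seq V) : bool :=
  path e x p && (last x p == x).

Definition walk_length (V : eqType) (x : V) (p : seq V) : nat := size p.

Definition walk_nverts (V : eqType) (x : V) (p : seq V) : nat :=
  size (undup (x :: p)).

Definition tsp_tour (V : finType) (e : rel V) (x : V) (p : seq V) : Prop :=
  closed_walk e x p /\ forall v : V, v \in x :: p.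

(* Main.v *)
Require Import Defs.
From mathcomp Require Import all_boot all_order all_algebra.
From mathcomp Require Import zify.

Set Implicit Arguments. Unset Strict Implicit. Unset Printing Implicit Defensive.

Section Walks.
Variable V : finType.
Variable e : rel V.
Hypothesis e_sym : symmetric e.

Definition wends (w : V * seq V) : seq V := [:: w.1; last w.1 w.2].
Definition ends (J : seq (V * seq V)) := flatten (map wends J).
Definition lenJ (J : seq (V * seq V)) := sumn (map (fun w => size w.2) J).
Definition okw (w : V * seq V) := path e w.1 w.2.

Lemma rotate_walk y q u : closed_walk e y q -> u \in y :: q ->
  exists q', [/\ closed_walk e u q', size q' = size q & (u :: q') =i (y :: q)].
Proof.
rewrite inE => cw; case: eqP => [-> _|_ uq]; first by exists q.
move: cw; case/splitPr: uq => q1 q2; rewrite /closed_walk.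
case/andP; rewrite cat_path last_cat /= => /andP[p1 /andP[eu p2]] /eqP ly.
exists (q2 ++ rcons q1 u); split.
- rewrite /closed_walk cat_path ly rcons_path p1 eu p2 last_cat last_rcons eqxx.
  by [].
- rewrite !size_cat /= ?size_rcons; lia.
- move=> z; rewrite !inE !mem_cat mem_rcons !inE.
  have : y \in u :: q2 by rewrite -ly mem_last.
  rewrite inE; case: (z =P y) => [->|_]; first by case/orP=> ->; rewrite ?orbT.
  by case: (z == u); case: (z \in q1); case: (z \in q2).
Qed.

Definition revw (w : V * seq V) : V * seq V := (last w.1 w.2, rev (belast w.1 w.2)).

Lemma revw_ok w : okw (revw w) = okw w.
Proof.
rewrite /okw /revw /= rev_path; apply: eq_path => a b /=; exact: e_sym.
Qed.

Lemma revw_seq w : (revw w).1 :: (revw w).2 = rev (w.1 :: w.2).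
Proof. by case: w => a s; rewrite /revw /= [in RHS]lastI rev_rcons. Qed.

Lemma revw_last w : last (revw w).1 (revw w).2 = w.1.
Proof.
case: w => a s; rewrite /revw /=.
have := congr1 (last a) (revw_seq (a, s)); rewrite /revw /= => ->.
by rewrite rev_cons last_rcons.
Qed.

Lemma revw_size w : size (revw w).2 = size w.2.
Proof. by rewrite /revw /= size_rev size_belast. Qed.

Lemma split_first (p : pred V) s : has p s ->
  exists s1 x s2, [/\ s = s1 ++ x :: s2, p x & ~~ has p s1].
Proof.
elim: s => //= y s IH; case py: (p y) => /= H.
  by exists [::], y, s.
case: (IH H) => s1 [x [s2 [-> px hs]]]; exists (y :: s1), x, s2.
by rewrite /= py.
Qed.

Lemma chain n : forall (O : {set V}) a s, size s <= n -> path e a s ->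
  exists JA JB M, [/\ all okw JA, all okw JB, lenJ JA + lenJ JB = size s,
   uniq M /\ (forall y, (y \in M) = (y \in O) && (y \in s)) &
   perm_eq (ends JA) (a :: M ++ (if odd (size M) then [::] else [:: last a s])) /\
   perm_eq (ends JB) (M ++ (if odd (size M) then [:: last a s] else [::]))].
Proof.
elim: n => [|n IH] O a s.
  rewrite leqn0 => /nilP -> _; exists [:: (a, [::])], [::], [::].
  split => //; split => // y; by rewrite andbF.
move=> sz ps; case hs: (has (mem O) s); last first.
  exists [:: (a, s)], [::], [::]; split => //=.
  - by rewrite andbT.
  - rewrite /lenJ /=; lia.
  - split => // y; rewrite in_nil; apply/esym/negbTE/andP => -[yO ys].
    by move/negbT/hasPn: hs => /(_ y ys); rewrite /= yO.
case: (split_first hs) => s1 [o [s2 [def_s oO hs1]]].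
move: ps sz; rewrite def_s cat_path /= => /andP[p1 /andP[eo p2]].
rewrite size_cat /= => sz.
have sz2 : size s2 <= n by lia.
case: (IH (O :\ o) o s2 sz2 p2) => JA [JB [M [okA okB len [[uM mM] [pA pB]]]]].
have oM : o \notin M by rewrite mM !inE eqxx.
exists ((a, rcons s1 o) :: JB), JA, (o :: M); split.
- by rewrite /= /okw /= rcons_path p1 eo okB.
- by [].
- rewrite /lenJ /= size_rcons -!/(lenJ _); lia.
- split; first by rewrite /= oM uM.
  move=> y; rewrite inE mM !inE mem_cat !inE.
  case: (y =P o) => [->|_] /=; first by rewrite (oO : o \in O) orbT.
  case yO: (y \in O) => //=; case ys1: (y \in s1) => //=.
  by move/hasPn: hs1 => /(_ y ys1); rewrite /= yO.
- rewrite last_cat /=; split.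
  + rewrite /ends /= last_rcons perm_cons /= perm_cons.
    by case: (odd (size M)) pB => /= pB; rewrite -/(ends JB).
  + rewrite /ends /= -/(ends JA).
    by case: (odd (size M)) pA.
Qed.

End Walks.
Lemma handshake (V : finType) (t : rel V) : symmetric t -> irreflexive t ->
  ~~ odd #|[set v | odd (deg t v)]|.
Proof.
move=> ts ti.
have degE v : deg t v = \sum_y (if t v y then 1 else 0).
  by rewrite /deg -sum1_card big_mkcond /=; apply: eq_bigr => y _; rewrite inE.
have H1 : \sum_v deg t v = #|[set v | odd (deg t v)]| + (\sum_v (deg t v)./2).*2.
  rewrite -sum1_card [\sum_(i in _) 1]big_mkcond /= -muln2 big_distrl /= -big_split /=.
  apply: eq_bigr => v _; rewrite inE muln2.
  by rewrite -[in LHS](odd_double_half (deg t v)); case: (odd _).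
pose r := @enum_rank V.
have H2 : \sum_v deg t v =
   (\sum_v \sum_y (if t v y && (r v < r y) then 1 else 0)).*2.
  have -> : \sum_v deg t v = \sum_v \sum_y (if t v y && (r v < r y) then 1 else 0)
       + \sum_v \sum_y (if t v y && (r y < r v) then 1 else 0).
    rewrite -big_split /=; apply: eq_bigr => v _; rewrite degE -big_split /=.
    apply: eq_bigr => y _; case tvy: (t v y) => //=.
    have : v != y by apply: contraTneq tvy => ->; rewrite ti.
    have := @enum_rank_inj V v y.
    case: ltngtP => //= h1 h2 h3; by move: h3; rewrite (h2 (val_inj h1)) eqxx.
  rewrite -addnn; congr (_ + _); rewrite exchange_big /=.
  apply: eq_bigr => v _; apply: eq_bigr => y _; by rewrite ts.
move: H2; rewrite H1 => /(congr1 odd); rewrite oddD !odd_double addbF.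
by move=> ->.
Qed.
Section Tree.
Variable V : finType.
Variable t : rel V.
Hypothesis tsym : symmetric t.
Hypothesis tacyc : forall u v, t u v -> ~~ connect (del_edge t u v) u v.

Lemma tirr : irreflexive t.
Proof. by move=> u; apply/negP => /tacyc; rewrite connect0. Qed.

Definition tS (S : {set V}) : rel V := fun a b => [&& t a b, a \in S & b \in S].
Definition nbS (S : {set V}) w := [set y in S | t w y].
Definition treeS (S : {set V}) := forall a b, a \in S -> b \in S -> connect (tS S) a b.

Lemma path_suffix (r : rel V) x s l1 y l2 :
  x :: s = l1 ++ y :: l2 -> path r x s -> path r y l2.
Proof.
case: l1 => [|a l1] /= [-> ->] //; rewrite cat_path /=.
by case/andP => _ /andP[].
Qed.

Lemma path_del (u v x : V) s : path t x s -> u \notin belast x s ->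
  v \notin belast x s -> path (del_edge t u v) x s.
Proof.
elim: s x => //= b s IH x /andP[txb ps]; rewrite !inE !negb_or.
case/andP=> ux us /andP[vx vs]; rewrite IH // andbT /del_edge txb /=.
by rewrite ![x == _]eq_sym (negbTE ux) (negbTE vx).
Qed.

Lemma no_cycle y c q z : t z y -> path t y (c :: rcons q z) ->
  uniq (y :: c :: rcons q z) -> c = z.
Proof.
move=> tzy pth un; apply/eqP; apply: contraT => cz.
have : connect (del_edge t y z) y z.
  apply/connectP; exists (c :: rcons q z); last by rewrite /= last_rcons.
  move: pth un => /= /andP[tyc pq] /andP[ny /andP[nc uq]].
  have yc : y != c by apply: contraNneq ny => ->; rewrite inE eqxx.
  have yq : y \notin q by apply: contra ny => yq; rewrite inE mem_rcons inE yq !orbT.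
  rewrite /del_edge tyc eqxx /= (negbTE cz) /=.
  have yz : y != z by apply: contraTneq tzy => ->; rewrite tirr.
  rewrite (negbTE yz) /=; apply: path_del => //.
    by rewrite belast_rcons inE negb_or yc yq.
  rewrite belast_rcons inE negb_or eq_sym cz /=.
  by move: uq; rewrite rcons_uniq => /andP[].
have tyz : t y z by rewrite tsym.
by rewrite (negbTE (tacyc tyz)).
Qed.


Lemma split_mem (T : eqType) (x : T) s : x \in s -> exists s1 s2, s = s1 ++ x :: s2.
Proof.
elim: s => //= y s IH; rewrite inE; case: eqP => [-> _|_ /IH [s1 [s2 ->]]].
  by exists [::], s.
by exists (y :: s1), s2.
Qed.

Lemma tS_path_in (S : {set V}) w p : path (tS S) w p -> all (mem S) p.
Proof.
by elim: p w => //= b p IH w /andP[/and3P[_ _ ->] /IH].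
Qed.

Lemma leaf_ext (S : {set V}) m : forall w p, #|S| <= size p + m -> path (tS S) w p ->
  uniq (w :: p) -> w \in S -> p != [::] ->
  exists v u, [/\ v \in S, u \in S & nbS S v = [set u]].
Proof.
elim: m => [|m IH] w p szS pth un wS pn.
- have : #|w :: p| <= #|S|.
    apply/subset_leq_card/subsetP => y; rewrite inE; case/orP => [/eqP ->//|].
    by move: y; apply/allP/(tS_path_in pth).
  by rewrite (card_uniqP un) /=; lia.
case: (boolP [exists y, (y \in nbS S (last w p)) && (y \notin w :: p)]).
  case/existsP=> y /andP[yN yn]; apply: (IH w (rcons p y)) => //.
  - by rewrite size_rcons; lia.
  - rewrite rcons_path pth /tS; move: yN; rewrite inE => /andP[-> ->].
    rewrite andbT /=; move: pn; case/lastP: p pth {szS un yn} => //= p' z pth _.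
    by rewrite last_rcons; move/tS_path_in: pth => /allP; apply; rewrite mem_rcons inE eqxx.
  - by rewrite -rcons_cons rcons_uniq yn un.
  - by case: (p).
move/existsPn=> H.
case/lastP: p pth un {szS H} pn (H) => // p' z pth un _ H.
have zS : z \in S by move/tS_path_in: pth => /allP; apply; rewrite mem_rcons inE eqxx.
have := pth; rewrite rcons_path => /andP[pth' /and3P[tpz pzS _]].
exists z, (last w p'); split => //; apply/setP => y; rewrite !inE.
apply/idP/eqP => [/andP[yS tzy]|->]; last by rewrite pzS tsym.
move: (H y); rewrite !inE last_rcons yS tzy /= negbK.
rewrite mem_rcons inE; case: (y =P z) => [yz|_ /= yin].
  by move: tzy; rewrite yz tirr.
apply/eqP; apply: contraT => ylast.
case: (split_mem (yin : y \in w :: p')) => q1 [q2 defq].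
move: ylast; case: q2 defq => [|c q3] defq.
  by rewrite -[last w p']/(last w (w :: p')) defq last_cat /= eqxx.
move=> _.
have defl : w :: rcons p' z = q1 ++ y :: c :: rcons q3 z.
  by rewrite -rcons_cons defq rcons_cat.
have pc : path t y (c :: rcons q3 z).
  apply: (sub_path (e := tS S)); first by move=> a b /andP[].
  exact: path_suffix defl pth.
have uc : uniq (y :: c :: rcons q3 z).
  by move: un; rewrite defl cat_uniq => /and3P[].
have cz := no_cycle tzy pc uc.
by move: uc; rewrite cz /= mem_rcons inE eqxx /= andbF.
Qed.

Lemma leaf_exists (S : {set V}) : treeS S -> 1 < #|S| ->
  exists v u, [/\ v \in S, u \in S & nbS S v = [set u]].
Proof.
move=> tr /card_gt1P [a [b [aS bS ab]]].
case/connectP: (tr a b aS bS) => [[|c p] pth lst]; first by move: ab; rewrite lst eqxx.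
move: pth => /= /andP[tac _].
apply: (leaf_ext (m := #|S|) (w := a) (p := [:: c])) => //=.
- by rewrite tac.
- rewrite inE andbT; apply: contraTneq tac => ->.
  by rewrite /tS tirr.
Qed.

Lemma tree_del (S : {set V}) v u : treeS S -> v \in S -> nbS S v = [set u] ->
  treeS (S :\ v).
Proof.
move=> tr vS nb a b; rewrite !inE => /andP[av aS] /andP[bv bS].
case/connectP: (tr a b aS bS) => p pth lst.
case/shortenP: pth lst => p' pth' un _ lst; apply/connectP; exists p' => //.
have vn : v \notin p'.
  apply/negP => vin; case: (split_mem vin) => q1 [q2 defp].
  case: q2 defp => [|c q3] defp.
    by move: bv; rewrite lst defp last_cat /= eqxx.
  move: pth'; rewrite defp cat_path /= => /and3P[_ /and3P[txv xS _] /andP[/and3P[tvc _ cS] _]].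
  have : last a q1 \in nbS S v by rewrite inE xS tsym.
  have : c \in nbS S v by rewrite inE cS tvc.
  rewrite nb !inE => /eqP cu /eqP ex.
  move: un; rewrite defp -cat_cons cat_uniq => /and3P[_ /hasPn /(_ u)].
  rewrite !inE -cu eqxx orbT => /(_ isT); rewrite cu -ex.
  by move/negP; case; exact: (mem_last a q1).
apply: (sub_in_path (P := [pred z | z != v]) (e := tS S)).
- move=> x y; rewrite !inE => xv yv /and3P[txy xS yS]; by rewrite /tS txy !inE xv yv xS yS.
- by rewrite /= av /=; apply/allP => z zp; apply: contraNneq vn => <-.
- exact: pth'.
Qed.
End Tree.

Section Main.
Variable V : finType.
Variables e t : rel V.
Hypothesis e_sym : symmetric e.
Hypothesis tsym : symmetric t.
Hypothesis tsub : subrel t e.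
Hypothesis tacyc : forall u v, t u v -> ~~ connect (del_edge t u v) u v.

Local Notation okw := (okw e).
Local Notation tS := (tS t).
Local Notation nbS := (nbS t).
Local Notation treeS := (treeS t).
Definition degS (S : {set V}) w := #|nbS S w|.
Definition cov (W : seq (V * seq V)) z := has (fun w : V * seq V => z \in w.1 :: w.2) W.
Definition closedw (w : V * seq V) := last w.1 w.2 == w.1.

Lemma lenJ_cat (J1 J2 : seq (V * seq V)) : lenJ (J1 ++ J2) = lenJ J1 + lenJ J2.
Proof. by rewrite /lenJ map_cat sumn_cat. Qed.

Lemma ends_cat (J1 J2 : seq (V * seq V)) : ends (J1 ++ J2) = ends J1 ++ ends J2.
Proof. by rewrite /ends map_cat flatten_cat. Qed.

Lemma cov_cat (J1 J2 : seq (V * seq V)) z : cov (J1 ++ J2) z = cov J1 z || cov J2 z.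
Proof. by rewrite /cov has_cat. Qed.

Lemma lenJ_filter (p : pred (V * seq V)) (K : seq (V * seq V)) :
  lenJ [seq w <- K | p w] + lenJ [seq w <- K | ~~ p w] = lenJ K.
Proof.
elim: K => //= w K; rewrite /lenJ; case: (p w) => /=; lia.
Qed.

Lemma cov_filter (p : pred (V * seq V)) (K : seq (V * seq V)) z :
  cov K z = cov [seq w <- K | p w] z || cov [seq w <- K | ~~ p w] z.
Proof.
elim: K => //= w K IH; rewrite /cov; case: (p w) => /=; rewrite -!/(cov _ _) IH;
  by case: (z \in _); case: (cov _ z); case: (cov _ z).
Qed.

Lemma concat_closed (c : V) (K : seq (V * seq V)) :
  all okw K -> all closedw K -> all (fun w => w.1 == c) K ->
  [/\ path e c (flatten (map snd K)), last c (flatten (map snd K)) = c,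
      size (flatten (map snd K)) = lenJ K &
      forall z, cov K z -> z \in c :: flatten (map snd K)].
Proof.
elim: K => [|[a s] K IH] /=; first by split.
case/andP=> oks okK /andP[cls clK] /andP[/eqP ac acK].
case: (IH okK clK acK) => p1 l1 s1 c1; subst a.
move: oks cls; rewrite /okw /closedw /= => oks /eqP cls.
split.
- by rewrite cat_path oks cls p1.
- by rewrite last_cat cls l1.
- by rewrite size_cat s1 /lenJ.
- move=> z; rewrite /cov /= -/(cov K z) => /orP[|/c1].
    by rewrite !inE mem_cat; case: (z == c) => //= ->.
  by rewrite !inE mem_cat; case: (z == c) => //= ->; rewrite orbT.
Qed.

Lemma extract (J : seq (V * seq V)) v : v \in ends J -> all okw J ->
  exists a s J', [/\ okw (a, s), last a s = v, all okw J',
    perm_eq (ends J) (a :: v :: ends J') /\ lenJ J = size s + lenJ J' &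
    forall z, cov J z = (z \in a :: s) || cov J' z].
Proof.
elim: J => // [[b s] J IH]; rewrite /ends /= -/(ends (V:=V) J) !inE.
case/orP => [/eqP vb | /orP[/eqP vl | vJ]] /andP[okb okJ].
- exists (revw (b, s)).1, (revw (b, s)).2, J; split.
  + by rewrite -surjective_pairing revw_ok.
  + by rewrite revw_last vb.
  + by [].
  + split; last by rewrite /lenJ /= size_rev size_belast.
    rewrite vb; change (perm_eq ([:: b] ++ [:: last b s] ++ ends J)
      ([:: last b s] ++ [:: b] ++ ends J)).
    by rewrite perm_catCA.
  + move=> z; rewrite /cov /= -/(cov J z); congr (_ || _).
    by have := revw_seq (b, s); rewrite /revw /= => ->; rewrite mem_rev.
- exists b, s, J; rewrite -vl; split => //.
- case: (IH vJ okJ) => a [s' [J' [oka la okJ' [pe le] cv]]].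
  exists a, s', ((b, s) :: J'); split => //.
  + by rewrite /= okb.
  + split; last by rewrite /lenJ /= -!/(lenJ (V:=V) _) le; lia.
    rewrite /ends /= -/(ends (V:=V) J').
    apply: (perm_trans (y := [:: b; last b s] ++ a :: v :: ends J')).
      by rewrite /= !perm_cons.
    change (perm_eq ([:: b; last b s] ++ [:: a; v] ++ ends J')
      ([:: a; v] ++ [:: b; last b s] ++ ends J')).
    by rewrite perm_catCA.
  + move=> z; rewrite /cov /= -!/(cov _ z) cv.
    by case: (z \in _); case: (z \in _); case: (cov _ _).
Qed.


Lemma oddB1 n : 0 < n -> odd (n - 1) = ~~ odd n.
Proof. by case: n => // n _; rewrite subn1 /= negbK. Qed.

Lemma nbS_del (S : {set V}) v w : nbS (S :\ v) w = nbS S w :\ v.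
Proof. by apply/setP => y; rewrite !inE andbA [(y != v) && _]andbC. Qed.

Lemma nbS_u (S : {set V}) v u : nbS S v = [set u] -> forall w, w \in S -> (v \in nbS S w) = (w == u) && (v \in S).
Proof.
move=> nb w wS; rewrite !inE -(in_set1 w u) -nb !inE wS tsym /=.
by rewrite andbC.
Qed.

Lemma degS_del (S : {set V}) v u w : v \in S -> nbS S v = [set u] -> w \in S :\ v ->
  degS (S :\ v) w = degS S w - (w == u).
Proof.
move=> vS nb; rewrite inE => /andP[wv wS].
rewrite /degS nbS_del [#|nbS S w|](cardsD1 v) (nbS_u nb wS) vS andbT; lia.
Qed.

Lemma ends_update (S : {set V}) v u (E N : seq V) :
  v \in S -> nbS S v = [set u] -> uniq E ->
  (forall w, (w \in E) = (w \in S) && odd (degS S w)) ->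
  perm_eq E (v :: u :: N) \/ (u \notin E /\ perm_eq (u :: E) (v :: N)) ->
  uniq N /\ (forall w, (w \in N) = (w \in S :\ v) && odd (degS (S :\ v) w)).
Proof.
move=> vS nb uE mE.
have uN : u \in nbS S v by rewrite nb set11.
move: (uN); rewrite inE => /andP[uS tvu].
have uv : u != v by apply: contraTneq tvu => ->; rewrite (tirr tacyc).
have vE : v \in E by rewrite mE vS /degS nb cards1.
have du : 0 < degS S u.
  by rewrite /degS card_gt0; apply/set0Pn; exists v; rewrite inE vS tsym.
have uS' : u \in S :\ v by rewrite !inE uv.
have du' := degS_del vS nb uS'; rewrite eqxx /= in du'.
case => [pe | [uE' pe]].
- have uvN : uniq (v :: u :: N) by rewrite -(perm_uniq pe).
  split; first by case/and3P: uvN.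
  move: uvN => /= /andP[]; rewrite inE negb_or => /andP[_ vN] /andP[uN' _].
  move=> w; case: (w =P v) => [->|/eqP wv]; first by rewrite (negbTE vN) setD11.
  case: (w =P u) => [->|/eqP wu].
    rewrite (negbTE uN') uS' du' oddB1 //.
    by have := perm_mem pe u; rewrite !inE eqxx orbT mE uS /= => ->.
  have := perm_mem pe w; rewrite !inE (negbTE wv) (negbTE wu) /= => <-.
  have wS' : (w \in S :\ v) = (w \in S) by rewrite !inE wv.
  case wS: (w \in S); last by rewrite mE wS ?wS'.
  by rewrite mE wS ?wS' (degS_del vS nb) ?(negbTE wu) ?subn0 // !inE wv.
- have vuN : uniq (v :: N) by rewrite -(perm_uniq pe) /= uE' uE.
  split; first by case/andP: vuN.
  move: vuN => /= /andP[vN _].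
  move=> w; case: (w =P v) => [->|/eqP wv]; first by rewrite (negbTE vN) setD11.
  case: (w =P u) => [->|/eqP wu].
    have : u \in v :: N by rewrite -(perm_mem pe) inE eqxx.
    rewrite inE (negbTE uv) /= => ->.
    rewrite uS' du' oddB1 //; move: uE'; rewrite mE uS /=.
    by case: (odd _).
  have := perm_mem pe w; rewrite !inE (negbTE wv) (negbTE wu) /= => <-.
  have wS' : (w \in S :\ v) = (w \in S) by rewrite !inE wv.
  case wS: (w \in S); last by rewrite mE wS ?wS'.
  by rewrite mE wS ?wS' (degS_del vS nb) ?(negbTE wu) ?subn0 // !inE wv.
Qed.


Lemma cov_cons (w : V * seq V) W z : cov (w :: W) z = (z \in w.1 :: w.2) || cov W z.
Proof. by []. Qed.

Lemma arith1 (x1 x2 x3 x4 x5 : nat) : x1 + (x2 + (x3 + (x4 + x5))) = x2 + (x4 + (x1 + (x3 + x5))).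
Proof. lia. Qed.
Lemma arith2 (x1 x2 x3 x4 x5 : nat) :
  x1 + x4 + 1 + x2 + x3 + x5 = (x1 + (x2 + x3) + (x4 + x5)).+1.
Proof. lia. Qed.
Lemma arith3 (x1 x2 x3 : nat) : x1 + (x2 + x3) = x2 + (x1 + x3).
Proof. lia. Qed.
Lemma arith4 (x1 x3 x4 x5 : nat) :
  x3 + (x1 + x4 + 1 + x5) = (x1 + x3 + (x4 + x5)).+1.
Proof. lia. Qed.
Lemma arith5 (x1 x2 x3 x4 : nat) : x1 + (x2 + (x3 + x4)) = x3 + (x2 + (x1 + x4)).
Proof. lia. Qed.
Lemma arith6 (x1 x3 x4 x5 : nat) :
  x1 + x4 + 1 + x3 + x5 = (x1 + x3 + (x4 + x5)).+1.
Proof. lia. Qed.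

Lemma main_ind m : forall (S : {set V}) (J K : seq (V * seq V)), #|S| = m.+1 ->
  treeS S -> all okw J -> all okw K -> all closedw K -> all (fun w => w.1 \in S) K ->
  uniq (ends J) -> (forall w, (w \in ends J) = (w \in S) && odd (degS S w)) ->
  (forall z, (z \in S) || cov (J ++ K) z) ->
  exists y q, [/\ closed_walk e y q, forall z, z \in y :: q &
                  size q = m + lenJ J + lenJ K].
Proof.
elim: m => [|m IH] S J K cS trS okJ okK clK anK uE mE cv.
  have /cards1P [r defS] : #|S| == 1 by rewrite cS.
  have J0 : J = [::].
    case: J mE {okJ uE cv} => // [[a s] J] /(_ a).
    rewrite /ends /= inE eqxx /= defS /degS inE.
    case: (a =P r) => [->|_] /=; last by [].
    have -> : nbS [set r] r = set0.
      apply/setP => y; rewrite !inE; apply/negbTE; apply/andP => -[/eqP -> ].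
      by rewrite (tirr tacyc).
    by rewrite cards0.
  subst J.
  have anK' : all (fun w => w.1 == r) K.
    by apply/allP => w wK; move/allP: anK => /(_ w wK); rewrite defS inE.
  case: (concat_closed okK clK anK') => p1 l1 s1 c1.
  exists r, (flatten (map snd K)); split.
  - by rewrite /closed_walk p1 l1 eqxx.
  - move=> z; case/orP: (cv z); first by rewrite defS inE => /eqP ->; rewrite inE eqxx.
    exact: c1.
  - by rewrite s1.
have [v [u [vS uS nb]]] : exists v u, [/\ v \in S, u \in S & nbS S v = [set u]].
  by apply: (leaf_exists tsym tacyc trS); rewrite cS.
have tvu : t v u by move: (set11 u); rewrite -nb inE => /andP[].
have uv : u != v by apply: contraTneq tvu => ->; rewrite (tirr tacyc).
have vE : v \in ends J by rewrite mE vS /degS nb cards1.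
case: (extract vE okJ) => a [s [J' [okas las okJ' [peJ lenJe] covJ]]].
pose Kv := [seq w <- K | w.1 == v].
pose Ko := [seq w <- K | ~~ (w.1 == v)].
have okKv : all okw Kv by rewrite all_filter; apply: sub_all okK => w hw /=; rewrite hw implybT.
have okKo : all okw Ko by rewrite all_filter; apply: sub_all okK => w hw /=; rewrite hw implybT.
have clKv : all closedw Kv by rewrite all_filter; apply: sub_all clK => w hw /=; rewrite hw implybT.
have clKo : all closedw Ko by rewrite all_filter; apply: sub_all clK => w hw /=; rewrite hw implybT.
have anKv : all (fun w => w.1 == v) Kv by apply/allP => w; rewrite mem_filter => /andP[].
have anKo : all (fun w => w.1 \in S :\ v) Ko.
  apply/allP => w; rewrite mem_filter => /andP[wv wK].
  by rewrite !inE wv /=; move/allP: anK => /(_ w wK).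
case: (concat_closed okKv clKv anKv) => pfl lfl sfl cfl.
set fl := flatten (map snd Kv) in pfl lfl sfl cfl.
have lenK := lenJ_filter (fun w => w.1 == v) K.
have covK := cov_filter (fun w => w.1 == v) K.
set W1 := s ++ fl ++ [:: u].
have okW1 : path e a W1.
  rewrite /W1 cat_path (okas : path e a s) /= las cat_path pfl lfl /= andbT.
  exact: tsub.
have lW1 : last a W1 = u by rewrite /W1 !last_cat.
have sW1 : size W1 = size s + lenJ Kv + 1 by rewrite /W1 !size_cat sfl /= addnA.
have cW1 : forall z, (z \in a :: s) || cov Kv z || (z == v) -> z \in a :: W1.
  move=> z; rewrite /W1 -cat_cons mem_cat.
  have vas : v \in a :: s by rewrite -las mem_last.
  case/orP => [/orP[->//|/cfl]|/eqP ->]; last by rewrite vas.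
  rewrite inE => /orP[/eqP ->|zfl]; first by rewrite vas.
  by rewrite mem_cat zfl orbT.
have cS' : #|S :\ v| = m.+1 by move: cS; rewrite (cardsD1 v) vS; case.
have trS' : treeS (S :\ v) by exact: (tree_del tsym trS vS nb).
have covS : forall z, z \in S -> (z \in S :\ v) || (z == v).
  by move=> z0 zS; rewrite !inE zS andbT; case: (z0 == v).
suff [J2 [K2 [okJ2 okK2 [clK2 anK2] [uE2 mE2] [len2 cv2]]]] :
  exists J2 K2, [/\ all okw J2, all okw K2,
     all closedw K2 /\ all (fun w => w.1 \in S :\ v) K2,
     uniq (ends J2) /\
       (forall w, (w \in ends J2) = (w \in S :\ v) && odd (degS (S :\ v) w)) &
     lenJ J2 + lenJ K2 = (lenJ J + lenJ K).+1 /\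
     forall z, (z \in S :\ v) || cov (J2 ++ K2) z].
  case: (IH _ _ _ cS' trS' okJ2 okK2 clK2 anK2 uE2 mE2 cv2) => y [q [cw cq sq]].
  by exists y, q; split => //; rewrite sq -addnA len2 addnS !addSn addnA.
have cvall : forall z, [|| z \in S :\ v, z \in a :: W1, cov J' z | cov Ko z].
  move=> z; case/orP: (cv z) => [zS|].
    case/orP: (covS z zS) => [->//|zv]; by rewrite (cW1 z) ?zv ?orbT.
  rewrite cov_cat covJ covK => /orP[/orP[zs|zJ']|/orP[zKv|zKo]].
  - by rewrite (cW1 z) ?zs ?orbT.
  - by rewrite zJ' !orbT.
  - by rewrite (cW1 z) ?zKv ?orbT.
  - by rewrite zKo !orbT.
have uW1 : u \in a :: W1 by rewrite -lW1 mem_last.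
case uJ': (u \in ends J').
  case: (extract uJ' okJ') => b [s2 [J'' [okb lb okJ'' [peJ' lenJ'e] covJ']]].
  have okr2 : path e u (rev (belast b s2)).
    by have := revw_ok e_sym (b, s2); rewrite /okw /revw /= lb => ->.
  have lr2 : last u (rev (belast b s2)) = b.
    by have := revw_last (b, s2); rewrite /revw /= lb.
  have mr2 : forall z, z \in b :: s2 -> z \in u :: rev (belast b s2).
    by have := revw_seq (b, s2); rewrite /revw /= lb => -> z; rewrite mem_rev.
  have sr2 : size (rev (belast b s2)) = size s2 by rewrite size_rev size_belast.
  exists ((a, W1 ++ rev (belast b s2)) :: J''), Ko; split => //.
  - by rewrite /= okJ'' andbT /okw /= cat_path okW1 lW1 okr2.
  - apply: (ends_update vS nb uE mE); left.
    rewrite /ends /= -/(ends J'') last_cat lW1 lr2.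
    apply/permP => p; move/permP: peJ => /(_ p) ->; move/permP: peJ' => /(_ p) /= ->.
    exact: arith1.
  - split.
      rewrite /lenJ /= -!/(lenJ _) size_cat sW1 sr2 lenJe lenJ'e -lenK.
      exact: arith2.
    move=> z; case/or4P: (cvall z) => [->//|zW|zJ'|zKo]; apply/orP; right.
    + by rewrite /cov /= -cat_cons mem_cat zW.
    + move: zJ'; rewrite covJ' => /orP[/mr2|zJ'']; last first.
        by rewrite cov_cat /cov /= -/(cov J'' z) zJ'' !orbT.
      rewrite inE => /orP[/eqP ->|zr]; first by rewrite /cov /= -cat_cons mem_cat uW1.
      by rewrite /cov /= inE mem_cat zr !orbT.
    + by rewrite cov_cat zKo !orbT.
case: (u =P a) => [ua|/eqP ua].
  exists J', ((a, W1) :: Ko); split => //.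
  - by rewrite /= /okw /= okW1.
  - split; first by rewrite /= /closedw /= lW1 ua eqxx clKo.
    by rewrite /= anKo andbT !inE -ua uv uS.
  - apply: (ends_update vS nb uE mE); left.
    apply/permP => p; move/permP: peJ => /(_ p) ->; rewrite /= ua.
    exact: arith3.
  - split.
      rewrite /lenJ /= -!/(lenJ _) sW1 lenJe -lenK.
      exact: arith4.
    move=> z; case/or4P: (cvall z) => [->//|zW|zJ'|zKo]; apply/orP; right;
      rewrite cov_cat cov_cons /=.
    + by rewrite zW orbT.
    + by rewrite zJ'.
    + by rewrite zKo !orbT.
have uE' : u \notin ends J.
  by rewrite (perm_mem peJ) !inE (negbTE ua) (negbTE uv) uJ'.
exists ((a, W1) :: J'), Ko; split => //.
- by rewrite /= /okw /= okW1.
- apply: (ends_update vS nb uE mE); right; split => //.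
  rewrite /ends /= -/(ends J') lW1.
  apply/permP => p; move/permP: peJ => /= /(_ p) ->.
  exact: arith5.
- split.
    rewrite /lenJ /= -!/(lenJ _) sW1 lenJe -lenK.
    exact: arith6.
  move=> z; case/or4P: (cvall z) => [->//|zW|zJ'|zKo]; apply/orP; right;
    rewrite cov_cons cov_cat /=.
  + by rewrite zW.
  + by rewrite zJ' orbT.
  + by rewrite zKo !orbT.
Qed.

End Main.

Section TourA.
Variable V : finType.
Variable e : rel V.
Hypothesis e_sym : symmetric e.
Hypothesis conn : forall a b, connect e a b.

Lemma cross (P : pred V) a b : connect e a b -> P a -> ~~ P b ->
  exists c d, [/\ P c, ~~ P d & e c d].
Proof.
case/connectP => s; elim: s a => [|y s IH] a /=; first by move=> _ -> ->.
case/andP=> eay ps lb Pa nPb.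
case Py: (P y); first exact: (IH y ps lb Py nPb).
by exists a, y; rewrite Py.
Qed.

Lemma card_cons1 (d : V) (l : seq V) : d \notin l -> #|d :: l| = #|l|.+1.
Proof.
move=> dl.
have -> : #|d :: l| = #|[predU1 d & l]| by apply: eq_card => z; rewrite !inE.
by rewrite cardU1 dl add1n.
Qed.

Lemma tour_ext m : forall y q, closed_walk e y q -> #|V| - #|y :: q| <= m ->
  exists y' q', tsp_tour e y' q' /\ size q' = size q + 2 * (#|V| - #|y :: q|).
Proof.
elim: m => [|m IH] y q cw hm.
  exists y, q; split; last by move: hm; rewrite leqn0 => /eqP ->; rewrite muln0 addn0.
  split => // z; apply: contraT => zn.
  have : #|y :: q| < #|V|.
    rewrite -(cardC (mem (y :: q))) -{1}(addn0 #|y :: q|) ltn_add2l.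
    by apply/card_gt0P; exists z; rewrite !inE.
  by move: hm; rewrite leqn0 subn_eq0 => h1 h2; move: (leq_trans h2 h1); rewrite ltnn.
case: (boolP [forall z, z \in y :: q]) => [/forallP all|].
  have -> : #|y :: q| = #|V|.
    by apply/eqP; rewrite eqn_leq max_card /= subset_leq_card //; apply/subsetP => z _.
  by exists y, q; split; rewrite ?subnn ?muln0 ?addn0.
case/forallPn => z zn.
have [c [d [cin dn ecd]]] := cross (P := mem (y :: q)) (conn y z) (mem_head y q) zn.
case: (rotate_walk cw cin) => q' [cw' sq' mq'].
have cw2 : closed_walk e c (d :: c :: q').
  by move: cw'; rewrite /closed_walk /= ecd e_sym ecd.
have mem2 : (c :: d :: c :: q') =i d :: (y :: q).
  move=> w; rewrite [in RHS]in_cons -mq' !inE.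
  by case: (w == c); case: (w == d).
have card2 : #|c :: d :: c :: q'| = #|y :: q|.+1.
  by rewrite (eq_card mem2) (card_cons1 dn).
have hk : #|y :: q| < #|V|.
  by rewrite -card2 max_card.
case: (IH c (d :: c :: q') cw2) => [|y2 [q2 [tt sz]]].
  by rewrite card2; lia.
exists y2, q2; split => //; rewrite sz card2 /= sq'.
  by rewrite -(subnSK hk) mulnS addnA addn2.
Qed.

End TourA.

Lemma tourB (V : finType) (e t : rel V) (x : V) (p : seq V) :
  symmetric e -> 2 < #|V| -> spanning_tree e t -> closed_walk e x p ->
  (forall v : V, odd (deg t v) -> v \in x :: p) ->
  exists y q, tsp_tour e y q /\ (size q).*2 <= (#|V|.-1).*2 + size p.
Proof.
move=> es nV [tsym [tsub [tconn tacyc]]] cw hodd.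
have tirr' : irreflexive t := tirr tacyc.
have degE w : degS t setT w = deg t w.
  by rewrite /degS /deg; apply: eq_card => y; rewrite !inE.
have trT : treeS t setT.
  move=> a b _ _; rewrite (eq_connect (e' := t)) //.
  by move=> c d; rewrite /tS !inE !andbT.
have cT : #|[set: V]| = (#|V|.-1).+1 by rewrite cardsT; case: #|V| nV.
suff [J [okJ uJ mJ lJ]] : exists J, [/\ all (okw e) J, uniq (ends J),
    forall w, (w \in ends J) = (w \in [set: V]) && odd (degS t setT w) &
    (lenJ J).*2 <= size p].
  case: (main_ind es tsym tsub tacyc (K := [::]) cT trT okJ isT isT isT uJ mJ)
     => [z|y [q [cw' cq sq]]]; first by rewrite inE.
  exists y, q; split => //.
  by rewrite sq /= addn0 doubleD leq_add2l.
pose O := [set v | odd (deg t v)].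
case: (set_0Vmem O) => [O0 | [o oO]].
  exists [::]; split => // w; rewrite in_nil inE degE /=.
  apply/esym/negbTE/negP => h.
  have : w \in O by rewrite inE.
  by rewrite O0 inE.
have ox : o \in x :: p by apply: hodd; rewrite inE in oO.
case: (rotate_walk cw ox) => q' [cw' sq' mq'].
move: cw'; rewrite /closed_walk => /andP[pq' /eqP lq'].
case: (chain (O :\ o) (leqnn (size q')) pq') => JA [JB [M [okA okB len [uM mM] [pA pB]]]].
have MO : M =i O :\ o.
  move=> w; rewrite mM; case wO: (w \in O :\ o) => //=.
  move: wO; rewrite !inE => /andP[wo wd].
  by have := hodd w wd; rewrite -mq' inE (negbTE wo).
have szM : size M = #|O|.-1.
  by rewrite -(card_uniqP uM) (eq_card MO) (cardsD1 o O) oO.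
have oddM : odd (size M).
  have hs := handshake tsym tirr'.
  have O0 : 0 < #|O| by apply/card_gt0P; exists o.
  rewrite szM; move: hs O0; rewrite -/O; case: #|O| => //= k.
  by rewrite negbK.
rewrite oddM /= cats0 in pA; rewrite oddM lq' in pB.
have oM : o \notin M by rewrite MO !inE eqxx.
have memO w : (w \in o :: M) = (w \in [set: V]) && odd (degS t setT w).
  rewrite inE MO !inE degE; case: (w =P o) => [->|] //=.
  by move: oO; rewrite inE.
have ends_ok (J : seq (V * seq V)) : perm_eq (ends J) (o :: M) ->
    uniq (ends J) /\ forall w, (w \in ends J) = (w \in [set: V]) && odd (degS t setT w).
  move=> pe; split; first by rewrite (perm_uniq pe) /= oM uM.
  by move=> w; rewrite (perm_mem pe) memO.
have pB' : perm_eq (ends JB) (o :: M).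
  by apply: (perm_trans pB); rewrite perm_catC.
case: (leqP (lenJ JA) (lenJ JB)) => h.
  case: (ends_ok JA pA) => u1 m1; exists JA; split => //.
  by rewrite -sq' -len -addnn leq_add2l.
case: (ends_ok JB pB') => u1 m1; exists JB; split => //.
by rewrite -sq' -len -addnn leq_add2r ltnW.
Qed.

From mathcomp Require Import lra.
Import Order.TTheory GRing.Theory Num.Theory.
Local Open Scope ring_scope.

Lemma real_key (R : realFieldType) (g n k l a b c : R) : g < 3 -> 1 <= k -> k <= n ->
  0 <= l -> l <= (1+g)*k -> a = l + 2*(n-k) -> 2*b <= 2*(n-1) + l -> c = 2*(n-1) ->
  a*(3-g) <= 4*n \/ b*(3-g) <= 4*n \/ c*(3-g) <= 4*n.
Proof.
move=> g3 k1 kn l0 lk -> hb ->.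
have gk : 0 <= (1 + g) * k by apply: le_trans lk.
have g1 : 0 <= 1 + g.
  case: (lerP 0 (1 + g)) => // h; exfalso.
  have : (1 + g) * k < 0 by rewrite pmulr_llt0 //; lra.
  lra.
case: (lerP 1 g) => hg.
  right; right.
  have P : 0 <= (2 * (n - 1)) * (g - 1) by apply: mulr_ge0; lra.
  lra.
have P1 : 0 <= (1 - g) * (2 * (n - 1) + l - 2 * b) by apply: mulr_ge0; lra.
case: (lerP (l + 2 * (n - k)) b) => hab.
  left.
  have P2 : 0 <= (b - (l + 2 * (n - k))) * (2 - 2 * g) by apply: mulr_ge0; lra.
  lra.
right; left.
have P3 : 0 <= ((l + 2 * (n - k)) - b) * (1 + g) by apply: mulr_ge0; lra.
lra.
Qed.

Unset Implicit Arguments.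

Theorem theorem9 (R : realFieldType) (V : finType) (e : rel V) (gamma : R)
  (t : rel V) (x : V) (p : seq V) :
  simple_graph e ->
  two_vertex_connected e ->
  gamma < 3 ->
  spanning_tree e t ->
  closed_walk e x p ->
  (forall v : V, odd (deg t v) -> v \in x :: p) ->
  (walk_length x p)%:R <= (1 + gamma) * (walk_nverts x p)%:R ->
  exists (y : V) (q : seq V),
    tsp_tour e y q /\ (walk_length y q)%:R <= 4 * (#|V|)%:R / (3 - gamma).
Proof.
move=> [es _] [nV [conn _]] g3 st cw hodd hl.
have knv : walk_nverts x p = #|x :: p|.
  rewrite /walk_nverts -(card_uniqP (undup_uniq _)); apply: eq_card => z.
  exact: mem_undup.
have k1 : (0 < #|x :: p|)%N by apply/card_gt0P; exists x; rewrite inE eqxx.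
have kn : (#|x :: p| <= #|V|)%N := max_card _.
have n1 : (0 < #|V|)%N by apply: leq_ltn_trans nV.
case: (tour_ext es conn (m := #|V|) cw (leq_subr _ _)) => ya [qa [ta sa]].
have cw0 : closed_walk e x [::] by rewrite /closed_walk /= eqxx.
case: (tour_ext es conn (m := #|V|) cw0 (leq_subr _ _)) => y0 [q0 [t0 s0]].
have c1 : #|[:: x]| = 1%N by rewrite (card_uniqP _).
rewrite c1 /= in s0.
case: (tourB es nV st cw hodd) => yb [qb [tb sb]].
have g3' : 0 < 3 - gamma by rewrite subr_gt0.
have := @real_key R gamma #|V|%:R #|x :: p|%:R (size p)%:R (size qa)%:R (size qb)%:R
  (size q0)%:R g3.
rewrite knv /walk_length in hl.
rewrite ler1n k1 ler_nat kn ler0n.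
move=> /(_ isT isT isT hl).
rewrite sa natrD natrM (natrB _ kn) => /(_ erefl).
have hb : 2 * (size qb)%:R <= 2 * (#|V|%:R - 1) + (size p)%:R :> R.
  move: sb; rewrite -(ler_nat R) -!muln2 !natrD !natrM -subn1 (natrB _ n1) => h.
  lra.
move=> /(_ hb).
rewrite s0 ?add0n natrM (natrB _ n1) => /(_ erefl).
case => [h|[h|h]].
- exists ya, qa; split => //; rewrite /walk_length (ler_pdivlMr _ _ g3').
  by rewrite sa natrD natrM (natrB _ kn).
- by exists yb, qb; split => //; rewrite /walk_length (ler_pdivlMr _ _ g3').
- exists y0, q0; split => //; rewrite /walk_length (ler_pdivlMr _ _ g3').
  by rewrite s0 ?add0n natrM (natrB _ n1).
Qed.
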